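(* Fix $F$ and $c$. For $h_1\in(0,1)$ let $\underline h_2(h_1)\in(0,1)$ be defined by $F(h_1,1)=F(1,\underline h_2(h_1))$, and consider $\boldsymbol h=(h_1,h_2)$ with $h_1\in(0,1)$ and $h_2\in[\underline h_2(h_1),1)$ (equivalently, humans are stronger in dimension 2 than in dimension 1: $F(1,h_2)\ge F(h_1,1)$). For such $\boldsymbol h$ let $w^*_{\boldsymbol h}(\boldsymbol m)=\max\{\bar w_s,\bar w_b,\bar w_t\}$ denote labor income as a function of $\boldsymbol m\in[0,1]^2$. Then there exists $\bar h_1\in(0,1)$ such that: - If $h_1\ge\bar h_1$, then for every $h_2\in[\underline h_2(h_1),1)$, $\boldsymbol m=(1,0)$ maximizes $w^*_{\boldsymbol h}$ over $[0,1]^2$. - If $h_1<\bar h_1$, then there exists $\bar h_2(h_1)\in[\underline h_2(h_1),1)$ such that: if $h_2\in[\bar h_2(h_1),1)$ then $\boldsymbol m=(1,0)$ maximizes $w^*_{\boldsymbol h}$ over $[0,1]^2$; and if $h_2\in[\underline h_2(h_1),\bar h_2(h_1))$ then $\boldsymbol m=(1,1)$ maximizes $w^*_{\boldsymbol h}$ over $[0,1]^2$.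
   Context: $F$ is a cumulative distribution function on $[0,1]^2$ with a density $f$ that has full support on $[0,1]^2$, and $c\in(0,1)$. For $\boldsymbol x,\boldsymbol y\in[0,1]^2$ write $\boldsymbol x\vee\boldsymbol y=(\max\{x_1,y_1\},\max\{x_2,y_2\})$, and for $F(\boldsymbol x)<1$ let $n(\boldsymbol x)=\frac{1}{c(1-F(\boldsymbol x))}$. Given $\boldsymbol h\in(0,1)^2$ and $\boldsymbol m\in[0,1]^2$ define $\bar w_s=F(\boldsymbol h)$, $\bar w_b=n(\boldsymbol m)\big(F(\boldsymbol m\vee\boldsymbol h)-F(\boldsymbol m)\big)$ (with $\bar w_b:=0$ if $F(\boldsymbol m)=1$), $\bar w_t=F(\boldsymbol m\vee\boldsymbol h)-F(\boldsymbol m)/n(\boldsymbol h)$. In the model with abundant machines, $\max\{\bar w_s,\bar w_b,\bar w_t\}$ is the equilibrium wage (labor income) when humans have knowledge $\boldsymbol h$ and machines have knowledge $\boldsymbol m$. *)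

(* Defs.v *)
From HB Require Import structures.
From mathcomp Require Import all_boot all_order all_algebra.
From mathcomp Require Import all_classical all_reals all_analysis.
Set Implicit Arguments. Unset Strict Implicit. Unset Printing Implicit Defensive.
Import Order.TTheory GRing.Theory Num.Theory.
Import numFieldNormedType.Exports.
Local Open Scope classical_set_scope.
Local Open Scope ring_scope.

Definition leb2 (R : realType) := ((@lebesgue_measure R) \x (@lebesgue_measure R))%E.

Definition unit_square (R : realType) : set (R * R) := `[0, 1]%classic `*` `[0, 1]%classic.

Definition box (R : realType) (x : R * R) : set (R * R) :=
  `[0, x.1]%classic `*` `[0, x.2]%classic.

Definition cdf_of (R : realType) (f : R * R -> R) (x : R * R) : R :=
  fine (\int[@leb2 R]_(p in box x) (f p)%:E)%E.

Definition full_support_density (R : realType) (f : R * R -> R) : Prop :=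
  [/\ measurable_fun setT f,
      (forall p, 0 <= f p),
      (forall p, @unit_square R p -> 0 < f p),
      (forall p, ~ @unit_square R p -> f p = 0) &
      (\int[@leb2 R]_(p in @unit_square R) (f p)%:E = 1)%E].

Definition vmax (R : realType) (x y : R * R) : R * R :=
  (Num.max x.1 y.1, Num.max x.2 y.2).

Definition nfun (R : realType) (F : R * R -> R) (c : R) (x : R * R) : R :=
  1 / (c * (1 - F x)).

Definition wbar_s (R : realType) (F : R * R -> R) (h : R * R) : R := F h.

Definition wbar_b (R : realType) (F : R * R -> R) (c : R) (h m : R * R) : R :=
  if F m == 1 then 0 else nfun F c m * (F (vmax m h) - F m).

Definition wbar_t (R : realType) (F : R * R -> R) (c : R) (h m : R * R) : R :=
  F (vmax m h) - F m / nfun F c h.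

Definition wstar (R : realType) (F : R * R -> R) (c : R) (h m : R * R) : R :=
  Num.max (wbar_s F h) (Num.max (wbar_b F c h m) (wbar_t F c h m)).

Definition maximizes (R : realType) (F : R * R -> R) (c : R) (h m0 : R * R) : Prop :=
  forall m, @unit_square R m -> wstar F c h m <= wstar F c h m0.

(* Main.v *)
Require Import Defs.
From HB Require Import structures.
From mathcomp Require Import all_boot all_order all_algebra.
From mathcomp Require Import all_classical all_reals all_analysis.
Import Order.TTheory GRing.Theory Num.Theory.
Import numFieldNormedType.Exports.
Local Open Scope ring_scope.
From mathcomp Require Import ring lra measurable_realfun.
Set Implicit Arguments. Unset Strict Implicit. Unset Printing Implicit Defensive.

Definition goodF (R : realType) (F : R * R -> R) : Prop :=
 [/\ (forall x, 0 <= F x <= 1),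
     (forall x y : R * R, x.1 <= y.1 -> x.2 <= y.2 -> F x <= F y),
     [/\ F (1,1) = 1, F (1,0) = 0 & F (0,1) = 0],
     (forall x1 y1 a b : R, x1 <= y1 -> a <= b ->
        F (x1,b) - F (x1,a) <= F (y1,b) - F (y1,a)) &
     ((forall a b : R, 0 <= a -> a < b -> b <= 1 -> F (1,a) < F (1,b) /\ F (a,1) < F (b,1)) /\
     (forall x : R, 0 <= x <= 1 -> continuous (fun t => F (x,t)) /\ continuous (fun t => F (t,x))))].

Lemma wstar_bound (R : realType) (F : R * R -> R) (c h1 h2 : R) (m : R * R) :
  goodF F -> 0 < c < 1 -> 0 < h1 < 1 -> 0 < h2 < 1 -> F (h1,1) <= F (1,h2) ->
  unit_square m ->
  wstar F c (h1,h2) m <= Num.max (F (1,h2) / c) (1 - c * (1 - F (h1,h2))).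
Proof.
case=> F01 Fmono [F11 F10 F01'] _ [Fstr _] /andP[c0 c1] /andP[h10 h11] /andP[h20 h21] hadm.
case: m => a b [/=]; rewrite !in_itv /= => /andP[a0 a1] /andP[b0 b1].
have Fh1 : F (h1,h2) <= F (1,h2) by apply: Fmono => //=; lra.
have Fhlt : F (h1,h2) < 1.
  by have [+ _] := Fstr h2 1 (ltW h20) h21 (lexx _); rewrite F11; lra.
have F1h2 := F01 (1,h2). have Fh := F01 (h1,h2). have Fm := F01 (a,b).
set M := Num.max _ _.
have HA : F (1,h2) / c <= M by rewrite le_max lexx.
have HB : 1 - c * (1 - F (h1,h2)) <= M by rewrite le_max lexx orbT.
have F1c : F (1,h2) <= F (1,h2) / c.
  by rewrite ler_pdivlMr //; nra.
have nfh x : x / nfun F c (h1,h2) = x * (c * (1 - F (h1, h2))).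
  by rewrite /nfun div1r invrK.
rewrite /wstar !ge_max; apply/andP; split.
  by apply: le_trans (HB); rewrite /wbar_s; nra.
have [/andP[ha hb]|nb] := boolP ((h1 <= a) && (h2 <= b)).
  have vE : vmax (a,b) (h1,h2) = (a,b).
    by rewrite /vmax /= !max_l.
  rewrite /wbar_b /wbar_t vE subrr mulr0 if_same nfh; apply/andP; split.
    apply: le_trans (HA); apply: divr_ge0; lra.
  apply: le_trans (HB).
  case/andP: Fm => Fm0 Fm1; case/andP: Fh => Fh0 Fh1'.
  have := mulr_ge0 (x := 1 - F (a,b)) (y := 1 - c * (1 - F (h1,h2))).
  nra.
have Fv : F (vmax (a,b) (h1,h2)) <= F (1,h2).
  case/nandP: nb; rewrite -ltNge => hlt.
    apply: le_trans (hadm); apply: Fmono; rewrite /vmax /=.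
      by rewrite ge_max; apply/andP; split; lra.
    by rewrite ge_max; apply/andP; split; lra.
  apply: Fmono; rewrite /vmax /=.
    by rewrite ge_max; apply/andP; split; lra.
  by rewrite ge_max; apply/andP; split; lra.
have Fv0 := F01 (vmax (a,b) (h1,h2)).
apply/andP; split; last first.
  rewrite /wbar_t nfh; apply: le_trans (HA); apply: le_trans (F1c).
  case/andP: Fm => Fm0 Fm1; case/andP: Fh => Fh0 Fh1'.
  have Fhlt' : 0 < 1 - F (h1,h2) by lra.
  have := mulr_ge0 Fm0 (mulr_ge0 (ltW c0) (ltW Fhlt')).
  nra.
rewrite /wbar_b; case: ifP => [_|/negbT Fm1].
  apply: le_trans (HA); apply: divr_ge0; lra.
have Fmlt : F (a,b) < 1 by rewrite lt_neqAle Fm1 andTb; case/andP: Fm.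
apply: le_trans (HA); rewrite /nfun mul1r.
apply: (@le_trans _ _ (F (vmax (a, b) (h1, h2)) / c)); last first.
  by rewrite ler_pM2r // invr_gt0.
rewrite ler_pdivrMl; last by apply: mulr_gt0 => //; lra.
have -> : c * (1 - F (a, b)) * (F (vmax (a, b) (h1, h2)) / c) =
   (1 - F (a, b)) * F (vmax (a, b) (h1, h2)).
  by field; lra.
case/andP: Fm => Fm0 Fm1'; case/andP: Fv0 => Fv00 Fv01.
have Fv1 : 0 <= 1 - F (vmax (a, b) (h1, h2)) by lra.
have := mulr_ge0 Fm0 Fv1.
nra.
Qed.

Lemma w10 (R : realType) (F : R * R -> R) (c h1 h2 : R) :
  goodF F -> 0 < c < 1 -> 0 < h1 < 1 -> 0 < h2 < 1 ->
  F (1,h2) / c <= wstar F c (h1,h2) (1,0).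
Proof.
case=> F01 Fmono [F11 F10 F01'] _ _ /andP[c0 c1] /andP[h10 h11] /andP[h20 h21].
rewrite /wstar le_max; apply/orP; right; rewrite le_max; apply/orP; left.
rewrite /wbar_b F10 eq_sym oner_eq0 /vmax /= max_l ?max_r; try lra.
by rewrite /nfun F10 !subr0 mulr1 div1r mulrC.
Qed.

Lemma w11 (R : realType) (F : R * R -> R) (c h1 h2 : R) :
  goodF F -> 0 < c < 1 -> 0 < h1 < 1 -> 0 < h2 < 1 ->
  1 - c * (1 - F (h1,h2)) <= wstar F c (h1,h2) (1,1).
Proof.
case=> F01 Fmono [F11 F10 F01'] _ _ /andP[c0 c1] /andP[h10 h11] /andP[h20 h21].
rewrite /wstar le_max; apply/orP; right; rewrite le_max; apply/orP; right.
rewrite /wbar_t /vmax /= !max_l; try lra.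
by rewrite F11 /nfun div1r invrK mul1r.
Qed.

Lemma max10 (R : realType) (F : R * R -> R) (c h1 h2 : R) :
  goodF F -> 0 < c < 1 -> 0 < h1 < 1 -> 0 < h2 < 1 -> F (h1,1) <= F (1,h2) ->
  1 - c * (1 - F (h1,h2)) <= F (1,h2) / c ->
  maximizes F c (h1,h2) (1,0).
Proof.
move=> gF c01 h1i h2i adm g0 m um.
apply: le_trans (wstar_bound gF c01 h1i h2i adm um) _.
apply: le_trans (w10 gF c01 h1i h2i).
by rewrite ge_max lexx g0.
Qed.

Lemma max11 (R : realType) (F : R * R -> R) (c h1 h2 : R) :
  goodF F -> 0 < c < 1 -> 0 < h1 < 1 -> 0 < h2 < 1 -> F (h1,1) <= F (1,h2) ->
  F (1,h2) / c <= 1 - c * (1 - F (h1,h2)) ->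
  maximizes F c (h1,h2) (1,1).
Proof.
move=> gF c01 h1i h2i adm g0 m um.
apply: le_trans (wstar_bound gF c01 h1i h2i adm um) _.
apply: le_trans (w11 gF c01 h1i h2i).
by rewrite ge_max lexx g0.
Qed.

Lemma main_abs (R : realType) (F : R * R -> R) (c : R) :
  goodF F -> 0 < c < 1 ->
  exists hb1 : R, 0 < hb1 < 1 /\
    (forall h1 h2 : R, hb1 <= h1 < 1 -> 0 < h2 < 1 ->
       F (1, h2) >= F (h1, 1) ->
       maximizes F c (h1, h2) (1, 0)) /\
    (forall h1 : R, 0 < h1 < hb1 ->
       exists hb2 : R, 0 < hb2 < 1 /\ F (1, hb2) >= F (h1, 1) /\
         (forall h2 : R, hb2 <= h2 < 1 ->
            maximizes F c (h1, h2) (1, 0)) /\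
         (forall h2 : R, 0 < h2 < hb2 -> F (1, h2) >= F (h1, 1) ->
            maximizes F c (h1, h2) (1, 1))).
Proof.
move=> gF c01; have gF' := gF.
case: gF' => F01 Fmono [F11 F10 F01'] Frect [Fstr Fcont].
have c01' := c01; case/andP: c01' => c0 c1.
have i1 : (0 <= (1:R)) && ((1:R) <= 1) by apply/andP; split; lra.
have [hb1 hb1i Fhb1] : exists2 hb1, hb1 \in `[0,1] & F (hb1,1) = c.
  apply: IVT; first exact: ler01.
    by apply: continuous_subspaceT; exact: (Fcont 1 i1).2.
  by rewrite F01' F11 ge_min le_max; apply/andP; split; apply/orP; [left|right]; lra.
move: hb1i; rewrite in_itv /= => /andP[hb10 hb11].
have hb1_0 : 0 < hb1.
  by rewrite lt_neqAle hb10 andbT; apply/eqP => e; move: Fhb1; rewrite -e F01'; lra.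
have hb1_1 : hb1 < 1.
  by rewrite lt_neqAle hb11 andbT; apply/eqP => e; move: Fhb1; rewrite e F11; lra.
exists hb1; split; first by rewrite hb1_0 hb1_1.
split.
  move=> h1 h2 /andP[hh1 h11] h2i adm.
  have h1i : 0 < h1 < 1 by apply/andP; split; lra.
  apply: max10 => //.
  have Fc : c <= F (1,h2).
    by rewrite -Fhb1; apply: le_trans adm; apply: Fmono => /=; lra.
  have : 1 <= F (1,h2) / c by rewrite ler_pdivlMr // mul1r.
  have := F01 (h1,h2); case/andP => F0 F1.
  nra.
move=> h1 /andP[h10 h1b].
have h1i : 0 < h1 < 1 by apply/andP; split; lra.
have Fh1pos : 0 < F (h1,1).
  by have [_ +] := Fstr 0 h1 (lexx _) h10 (ltW (lt_trans h1b hb1_1)); rewrite F01'.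
have Fh1lt : F (h1,1) < 1.
  by have [_ +] := Fstr h1 1 (ltW h10) (lt_trans h1b hb1_1) (lexx _); rewrite F11.
have [h2lo h2loi Fh2lo] : exists2 h2lo, h2lo \in `[0,1] & F (1,h2lo) = F (h1,1).
  apply: IVT; first exact: ler01.
    by apply: continuous_subspaceT; exact: (Fcont 1 i1).1.
  by rewrite F10 F11 ge_min le_max; apply/andP; split; apply/orP; [left|right]; lra.
move: h2loi; rewrite in_itv /= => /andP[h2lo0 h2lo1].
have h2lo_0 : 0 < h2lo.
  by rewrite lt_neqAle h2lo0 andbT; apply/eqP => e; move: Fh2lo; rewrite -e F10; lra.
have h2lo_1 : h2lo < 1.
  by rewrite lt_neqAle h2lo1 andbT; apply/eqP => e; move: Fh2lo; rewrite e F11; lra.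
pose g t := F (1,t) / c - (1 - c * (1 - F (h1,t))).
have gmono s t : s <= t -> g s <= g t.
  move=> st; rewrite /g.
  have r := Frect h1 1 s t (ltW (lt_trans h1b hb1_1)) st.
  have m := Fmono (h1,s) (h1,t) (lexx _) st.
  set D1 := F (1,t) - F (1,s).
  have D10 : 0 <= D1 by rewrite /D1; lra.
  have c1' : 0 <= 1 - c by lra.
  have k : D1 <= D1 / c.
    rewrite ler_pdivlMr //; have := mulr_ge0 D10 c1'; nra.
  have e : F (1,t) / c - F (1,s) / c = D1 / c by rewrite /D1 mulrBl.
  have Dh0 : 0 <= F (h1,t) - F (h1,s) by lra.
  have := mulr_ge0 c1' Dh0.
  have D1e : D1 = F (1,t) - F (1,s) by [].
  nra.
have ih1 : 0 <= h1 <= 1 by apply/andP; split; lra.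
have gcont : continuous g.
  move=> t; rewrite /g.
  have c1t := (Fcont 1 i1).1 t.
  have cht := (Fcont h1 ih1).1 t.
  apply: cvgB.
    by apply: cvgMr_tmp; exact: c1t.
  apply: cvgB; first exact: cvg_cst.
  apply: cvgMl_tmp; apply: cvgB; first exact: cvg_cst.
  exact: cht.
have adm_ge h2 : h2lo <= h2 -> F (h1,1) <= F (1,h2).
  by move=> hh; rewrite -Fh2lo; apply: Fmono => /=.
have [gpos|gneg] := leP 0 (g h2lo).
  exists h2lo; split; first by rewrite h2lo_0 h2lo_1.
  split; first by rewrite Fh2lo.
  split.
    move=> h2 /andP[hh h21].
    have h2i : 0 < h2 < 1 by apply/andP; split; lra.
    apply: max10 => //; first exact: adm_ge.
    have := gmono _ _ hh; move: gpos; rewrite /g; lra.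
  move=> h2 /andP[h20 hh] adm.
  have [+ _] := Fstr h2 h2lo (ltW h20) hh h2lo1.
  lra.
have g1 : 0 < g 1.
  rewrite /g F11.
  have : 1 < 1 / c by rewrite ltr_pdivlMr // mul1r.
  have : 0 < c * (1 - F (h1,1)) by apply: mulr_gt0 => //; lra.
  lra.
have [hb2 hb2i ghb2] : exists2 hb2, hb2 \in `[h2lo,1] & g hb2 = 0.
  apply: IVT; first exact: h2lo1.
    exact: continuous_subspaceT.
  by rewrite ge_min le_max; apply/andP; split; apply/orP; [left|right]; lra.
move: hb2i; rewrite in_itv /= => /andP[hb2lo hb21].
have hb2_1 : hb2 < 1.
  by rewrite lt_neqAle hb21 andbT; apply/eqP => e; move: ghb2; rewrite e; lra.
exists hb2; split; first by apply/andP; split; lra.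
split; first exact: adm_ge.
split.
  move=> h2 /andP[hh h21].
  have h2i : 0 < h2 < 1 by apply/andP; split; lra.
  apply: max10 => //; first by apply: adm_ge; lra.
  have := gmono _ _ hh; rewrite ghb2 /g; lra.
move=> h2 /andP[h20 hh] adm.
have h2i : 0 < h2 < 1 by apply/andP; split; lra.
apply: max11 => //.
have := gmono _ _ (ltW hh); rewrite ghb2 /g; lra.
Qed.

Local Open Scope classical_set_scope.

Definition nu (R : realType) (f : R * R -> R) (A : set (R * R)) : \bar R :=
  (\int[@leb2 R]_(p in A) (f p)%:E)%E.

Lemma nu_ge0 (R : realType) (f : R * R -> R) A :
  full_support_density f -> (0 <= nu f A)%E.
Proof.
by case=> _ f0 _ _ _; apply: integral_ge0 => p _; rewrite lee_fin.
Qed.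

Lemma mfA (R : realType) (f : R * R -> R) (A : set (R * R)) :
  full_support_density f -> measurable_fun A (EFin \o f).
Proof.
case=> mf _ _ _ _; apply/measurable_EFinP.
exact: measurable_funS mf.
Qed.

Lemma nu_sub (R : realType) (f : R * R -> R) (A B : set (R * R)) :
  full_support_density f -> measurable A -> measurable B -> A `<=` B ->
  (nu f A <= nu f B)%E.
Proof.
move=> hf mA mB AB; apply: ge0_subset_integral => //.
  exact: mfA.
by case: hf => _ f0 _ _ _ p _; rewrite lee_fin.
Qed.

Lemma nu_setT (R : realType) (f : R * R -> R) :
  full_support_density f -> nu f setT = 1%E.
Proof.
move=> hf; have hf' := hf; case: hf' => mf f0 fpos fout f1.
have mS : measurable (@unit_square R).
  by apply: measurableX; exact: measurable_itv.
rewrite /nu -(setUv (@unit_square R)) ge0_integral_setU //.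
- rewrite f1 integral0_eq ?adde0 // => p /= Sp.
  by rewrite fout.
- exact: measurableC.
- exact: mfA.
- by move=> p _; rewrite lee_fin.
- by rewrite /disj_set setICr.
Qed.

Lemma nu_le1 (R : realType) (f : R * R -> R) (A : set (R * R)) :
  full_support_density f -> measurable A -> (nu f A <= 1)%E.
Proof.
by move=> hf mA; rewrite -(nu_setT hf); apply: nu_sub.
Qed.

Lemma nu_fineK (R : realType) (f : R * R -> R) (A : set (R * R)) :
  full_support_density f -> measurable A -> (fine (nu f A))%:E = nu f A.
Proof.
move=> hf mA; apply: fineK; rewrite ge0_fin_numE ?nu_ge0 //.
exact: le_lt_trans (nu_le1 hf mA) (ltry _).
Qed.

Lemma nu_diff (R : realType) (f : R * R -> R) (A B : set (R * R)) :
  full_support_density f -> measurable A -> measurable B -> A `<=` B ->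
  nu f B = (nu f A + nu f (B `\` A))%E.
Proof.
move=> hf mA mB AB.
have mD : measurable (B `\` A) by exact: measurableD.
rewrite {1}/nu.
rewrite -{1}(setDUK AB) ge0_integral_setU //.
- exact: mfA.
- by case: hf => _ f0 _ _ _ p _; rewrite lee_fin.
- by rewrite /disj_set setDE setICA setICr setI0.
Qed.

Lemma fine_diff (R : realType) (f : R * R -> R) (A B : set (R * R)) :
  full_support_density f -> measurable A -> measurable B -> A `<=` B ->
  fine (nu f B) - fine (nu f A) = fine (nu f (B `\` A)).
Proof.
move=> hf mA mB AB; apply/EFin_inj.
rewrite EFinB !nu_fineK //; last exact: measurableD.
rewrite (nu_diff hf mA mB AB) addeAC subee ?add0e //.
by rewrite -(nu_fineK hf mA).
Qed.

Lemma leb2_rect (R : realType) (I J : set R) :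
  measurable I -> measurable J -> (@leb2 R) (I `*` J) = (lebesgue_measure I * lebesgue_measure J)%E.
Proof.
by move=> mI mJ; rewrite /leb2 product_measure1E.
Qed.

Lemma nu_pos (R : realType) (f : R * R -> R) (A : set (R * R)) :
  full_support_density f -> measurable A -> A `<=` @unit_square R ->
  (0 < (@leb2 R) A)%E -> (0 < nu f A)%E.
Proof.
move=> hf mA AS muA; rewrite lt_neqAle nu_ge0 // andbT.
apply/negP => /eqP nu0.
have : (\int[@leb2 R]_(x in A) `|(EFin \o f) x| = 0)%E.
  rewrite [RHS]nu0 /nu; apply: eq_integral => p _ /=.
  by case: hf => _ f0 _ _ _; rewrite ger0_norm.
move=> H0; have := (ae_eq_integral_abs (@leb2 R) mA (@mfA _ _ A hf)).1 H0.
case=> N [mN N0 sN].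

have : A `<=` N.
  move=> p Ap; apply: sN => /= h.
  case: hf => _ _ fpos _ _.
  by move: (h Ap) => /= [e]; have := fpos p (AS p Ap); rewrite e ltxx.
move=> AN; have := le_measure (@leb2 R) (mem_set mA) (mem_set mN) AN.
move=> h; have := lt_le_trans muA h.
have N0' : (@leb2 R) N = 0%E := N0.
move=> hp; suff : ((0 : \bar R) < 0)%E by rewrite ltxx.
by rewrite -[X in (_ < X)%E]N0; exact: hp.

Qed.

Lemma lam_cc (R : realType) (a b : R) : a <= b ->
  lebesgue_measure (`[a, b]%classic : set R) = (b - a)%:E.
Proof.
move=> ab; rewrite lebesgue_measure_itv /= lte_fin.
case: (ltP a b) => h; first by rewrite -EFinD.
have e : a = b by apply/eqP; rewrite eq_le ab h.
by rewrite e subrr.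
Qed.

Lemma lam_oc (R : realType) (a b : R) : a <= b ->
  lebesgue_measure (`]a, b]%classic : set R) = (b - a)%:E.
Proof.
move=> ab; rewrite lebesgue_measure_itv /= lte_fin.
case: (ltP a b) => h; first by rewrite -EFinD.
have e : a = b by apply/eqP; rewrite eq_le ab h.
by rewrite e subrr.
Qed.

Lemma mbox (R : realType) (x : R * R) : measurable (box x).
Proof. by apply: measurableX; exact: measurable_itv. Qed.

Lemma boxP (R : realType) (x p : R * R) :
  box x p <-> ((0 <= p.1 <= x.1) /\ (0 <= p.2 <= x.2)).
Proof. by rewrite /box /= !in_itv. Qed.

Lemma cdfE (R : realType) (f : R * R -> R) x : cdf_of f x = fine (nu f (box x)).
Proof. by []. Qed.

Lemma cdf01 (R : realType) (f : R * R -> R) x :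
  full_support_density f -> 0 <= cdf_of f x <= 1.
Proof.
move=> hf; rewrite cdfE -!lee_fin nu_fineK ?nu_ge0 ?nu_le1 //; exact: mbox.
Qed.

Lemma cdf_mono (R : realType) (f : R * R -> R) (x y : R * R) :
  full_support_density f -> x.1 <= y.1 -> x.2 <= y.2 -> cdf_of f x <= cdf_of f y.
Proof.
move=> hf h1 h2; rewrite !cdfE -lee_fin !nu_fineK; try exact: mbox.
apply: nu_sub => //; try exact: mbox.
move=> p /boxP [/andP[a b] /andP[c d]]; apply/boxP; split; apply/andP; split => //.
  exact: le_trans h1.
exact: le_trans h2.
all: exact: hf.
Qed.

Lemma box_sub (R : realType) (x y : R * R) :
  x.1 <= y.1 -> x.2 <= y.2 -> box x `<=` box y.
Proof.
move=> h1 h2 p /boxP [/andP[a b] /andP[c d]]; apply/boxP; split; apply/andP; split => //.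
  exact: le_trans h1.
exact: le_trans h2.
Qed.

Lemma cdf11 (R : realType) (f : R * R -> R) :
  full_support_density f -> cdf_of f (1,1) = 1.
Proof.
by case=> _ _ _ _ f1; rewrite /cdf_of (_ : box (1,1) = @unit_square R) // f1.
Qed.

Lemma cdf_null (R : realType) (f : R * R -> R) x :
  full_support_density f -> (@leb2 R) (box x) = 0%E -> cdf_of f x = 0.
Proof.
move=> hf h0; rewrite /cdf_of null_set_integral //; first exact: mbox.
exact: mfA.
Qed.

Lemma cdf10 (R : realType) (f : R * R -> R) :
  full_support_density f -> cdf_of f (1,0) = 0.
Proof.
move=> hf; apply: cdf_null => //.
rewrite /box /= leb2_rect ?lam_cc ?subrr ?mule0 //; exact: measurable_itv.
Qed.

Lemma cdf01' (R : realType) (f : R * R -> R) :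
  full_support_density f -> cdf_of f (0,1) = 0.
Proof.
move=> hf; apply: cdf_null => //.
rewrite /box /= leb2_rect ?lam_cc ?subrr ?mul0e //; exact: measurable_itv.
Qed.

Lemma cdf_rect (R : realType) (f : R * R -> R) (x1 y1 a b : R) :
  full_support_density f -> x1 <= y1 -> a <= b ->
  cdf_of f (x1,b) - cdf_of f (x1,a) <= cdf_of f (y1,b) - cdf_of f (y1,a).
Proof.
move=> hf xy ab; rewrite !cdfE !fine_diff //; try exact: mbox;
  try (by apply: box_sub => //=).
rewrite -lee_fin !nu_fineK //; try (apply: measurableD; exact: mbox).
apply: nu_sub => //; try (apply: measurableD; exact: mbox).
move=> p [/boxP [/andP[p10 p11] /andP[p20 p21]] nb]; split.
  by apply/boxP; rewrite p10 p20 p21 (le_trans p11 xy).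
move=> /boxP [/andP[_ q11] /andP[_ q21]]; apply: nb; apply/boxP.
by rewrite p10 p11 p20 q21.
Qed.

Lemma cdf_str (R : realType) (f : R * R -> R) (a b : R) :
  full_support_density f -> 0 <= a -> a < b -> b <= 1 ->
  cdf_of f (1,a) < cdf_of f (1,b) /\ cdf_of f (a,1) < cdf_of f (b,1).
Proof.
move=> hf a0 ab b1.
have mS : measurable (`[0, 1]%classic `*` `]a, b]%classic : set (R * R)).
  by apply: measurableX; exact: measurable_itv.
have mS' : measurable (`]a, b]%classic `*` `[0, 1]%classic : set (R * R)).
  by apply: measurableX; exact: measurable_itv.
split; rewrite -subr_gt0 !cdfE fine_diff //; try exact: mbox;
  try (by apply: box_sub => //=; lra);
  rewrite -lte_fin nu_fineK //; try (apply: measurableD; exact: mbox).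
- apply: (lt_le_trans (nu_pos hf mS _ _)).
  + move=> p [/=]; rewrite !in_itv /= => /andP[h1 h2] /andP[h3 h4].
    by rewrite /unit_square /= !in_itv /=; split; apply/andP; split; lra.
  + rewrite leb2_rect; try exact: measurable_itv.
    rewrite lam_cc ?lam_oc; [|lra|lra].
    by rewrite -EFinM lte_fin; apply: mulr_gt0; lra.
  apply: nu_sub => //; first (apply: measurableD; exact: mbox).
  move=> p [/=]; rewrite !in_itv /= => /andP[h1 h2] /andP[h3 h4]; split.
    by apply/boxP; rewrite h1 h2 h4 /=; lra.
  by move=> /boxP [_ /andP[_ h5]]; have := lt_le_trans h3 h5; rewrite ltxx.
- apply: (lt_le_trans (nu_pos hf mS' _ _)).
  + move=> p [/=]; rewrite !in_itv /= => /andP[h1 h2] /andP[h3 h4].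
    by rewrite /unit_square /= !in_itv /=; split; apply/andP; split; lra.
  + rewrite leb2_rect; try exact: measurable_itv.
    rewrite lam_cc ?lam_oc; [|lra|lra].
    by rewrite -EFinM lte_fin; apply: mulr_gt0; lra.
  apply: nu_sub => //; first (apply: measurableD; exact: mbox).
  move=> p [/=]; rewrite !in_itv /= => /andP[h1 h2] /andP[h3 h4]; split.
    by apply/boxP => /=; split; apply/andP; split; lra.
  by move=> /boxP [/andP[_ h5] _]; have := lt_le_trans h1 h5; rewrite ltxx.
Qed.

Lemma integrable_f (R : realType) (f : R * R -> R) :
  full_support_density f -> (@leb2 R).-integrable setT (EFin \o f).
Proof.
move=> hf; apply/integrableP; split; first exact: mfA.
have -> : (\int[@leb2 R]_x `|(EFin \o f) x| = nu f setT)%E.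
  apply: eq_integral => p _ /=.
  by case: hf => _ f0 _ _ _; rewrite ger0_norm.
by rewrite nu_setT // ltry.
Qed.

Lemma nu_abs_cont (R : realType) (f : R * R -> R) (e : R) :
  full_support_density f -> 0 < e ->
  exists d : R, 0 < d /\ forall S, measurable S -> ((@leb2 R) S < d%:E)%E ->
    fine (nu f S) < e.
Proof.
move=> hf e0.
have [d [d0 hd]] := integral_normr_continuous (integrable_f hf) e0.
exists d; split => // S mS Sd.
have := hd S mS Sd.
suff -> : Rintegral (@leb2 R) S (fun x => `|f x|) = fine (nu f S) by [].
rewrite /Rintegral; congr fine; apply: eq_integral => p _ /=.
by case: hf => _ f0 _ _ _; rewrite ger0_norm.
Qed.

Lemma cdf_unif (R : realType) (f : R * R -> R) (x e : R) :
  full_support_density f -> 0 <= x <= 1 -> 0 < e ->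
  exists d : R, 0 < d /\ forall u v, u <= v -> v - u < d ->
    cdf_of f (x,v) - cdf_of f (x,u) < e /\ cdf_of f (v,x) - cdf_of f (u,x) < e.
Proof.
move=> hf /andP[x0 x1] e0.
have [d [d0 hd]] := nu_abs_cont hf e0.
exists d; split => // u v uv vud.
have mS : measurable (`[0, x]%classic `*` `]u, v]%classic : set (R * R)).
  by apply: measurableX; exact: measurable_itv.
have mS' : measurable (`]u, v]%classic `*` `[0, x]%classic : set (R * R)).
  by apply: measurableX; exact: measurable_itv.
have hmeas : ((x * (v - u))%:E < d%:E)%E.
  by rewrite lte_fin; nra.
split; rewrite !cdfE fine_diff //; try exact: mbox;
  try (by apply: box_sub => //=; lra).
- apply: le_lt_trans (hd _ mS _); last first.
    rewrite leb2_rect; try exact: measurable_itv.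
    by rewrite lam_cc ?lam_oc // subr0 -EFinM.
  rewrite -lee_fin !nu_fineK //; try (apply: measurableD; exact: mbox).
  apply: nu_sub => //; first (apply: measurableD; exact: mbox).
  move=> p [/boxP /= [/andP[h1 h2] /andP[h3 h4]] nb] /=; rewrite !in_itv /=.
  rewrite h1 h2 h4 /=; split => //; rewrite ?andbT ltNge; apply/negP => pu; apply: nb.
  by apply/boxP => /=; rewrite h1 h2 h3 pu.
- apply: le_lt_trans (hd _ mS' _); last first.
    rewrite leb2_rect; try exact: measurable_itv.
    by rewrite lam_cc ?lam_oc // subr0 -EFinM mulrC.
  rewrite -lee_fin !nu_fineK //; try (apply: measurableD; exact: mbox).
  apply: nu_sub => //; first (apply: measurableD; exact: mbox).
  move=> p [/boxP /= [/andP[h1 h2] /andP[h3 h4]] nb] /=; rewrite !in_itv /=.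
  rewrite h3 h4 h2 /=; split => //; rewrite ?andbT ltNge; apply/negP => pu; apply: nb.
  by apply/boxP => /=; rewrite h1 h3 h4 pu.
Qed.

Lemma cdf_cont (R : realType) (f : R * R -> R) (x : R) :
  full_support_density f -> 0 <= x <= 1 ->
  continuous (fun t => cdf_of f (x,t)) /\ continuous (fun t => cdf_of f (t,x)).
Proof.
move=> hf hx.
have hx' := hx; case/andP: hx' => x0 x1.
split => t; apply/cvgrPdist_lt => e e0;
  have [d [d0 hd]] := cdf_unif hf hx e0;
  apply/nbhs_ballP; exists d => // s; rewrite /ball /= => hs.
- case: (leP t s) => ts.
    have sd : s - t < d by apply: le_lt_trans hs; rewrite distrC ler_norm.
    rewrite distrC ger0_norm ?subr_ge0; first exact: (hd t s ts sd).1.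
    by apply: cdf_mono => //=.
  have sd : t - s < d by apply: le_lt_trans hs; rewrite ler_norm.
  rewrite ger0_norm ?subr_ge0; first exact: (hd s t (ltW ts) sd).1.
  by apply: cdf_mono => //=; exact: ltW.
- case: (leP t s) => ts.
    have sd : s - t < d by apply: le_lt_trans hs; rewrite distrC ler_norm.
    rewrite distrC ger0_norm ?subr_ge0; first exact: (hd t s ts sd).2.
    by apply: cdf_mono => //=.
  have sd : t - s < d by apply: le_lt_trans hs; rewrite ler_norm.
  rewrite ger0_norm ?subr_ge0; first exact: (hd s t (ltW ts) sd).2.
  by apply: cdf_mono => //=; exact: ltW.
Qed.

Lemma goodF_cdf (R : realType) (f : R * R -> R) :
  full_support_density f -> goodF (cdf_of f).
Proof.
move=> hf; split.
- by move=> x; exact: cdf01.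
- by move=> x y; exact: cdf_mono.
- by split; [exact: cdf11 | exact: cdf10 | exact: cdf01'].
- by move=> x1 y1 a b; exact: cdf_rect.
split; first by move=> a b; exact: cdf_str.
by move=> x; exact: cdf_cont.
Qed.

Local Close Scope classical_set_scope.

(* h2 >= underline_h2(h1) is expressed by its defining equivalent
   F(1,h2) >= F(h1,1). *)
Theorem proposition4 (R : realType) (f : R * R -> R) (c : R) :
  full_support_density f -> 0 < c < 1 ->
  let F := cdf_of f in
  exists hb1 : R, 0 < hb1 < 1 /\
    (forall h1 h2 : R, hb1 <= h1 < 1 -> 0 < h2 < 1 ->
       F (1, h2) >= F (h1, 1) ->
       maximizes F c (h1, h2) (1, 0)) /\
    (forall h1 : R, 0 < h1 < hb1 ->
       exists hb2 : R, 0 < hb2 < 1 /\ F (1, hb2) >= F (h1, 1) /\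
         (forall h2 : R, hb2 <= h2 < 1 ->
            maximizes F c (h1, h2) (1, 0)) /\
         (forall h2 : R, 0 < h2 < hb2 -> F (1, h2) >= F (h1, 1) ->
            maximizes F c (h1, h2) (1, 1))).
Proof.
move=> hf c01 F.
exact: main_abs (goodF_cdf hf) c01.
Qed.
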